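(* Let $n\ge 4$, let $\beta\in PB_n$ be a Brunnian braid, and let $i,j,k\in\{1,\dots,n\}$ be distinct. Then $\phi_{(i,j,k)}(\phi_n(\beta))=1$ in the group $F$ defined below.
   Context: $PB_n$ is the pure braid group with standard generators $b_{ij}$ ($1\le i<j\le n$); $\beta$ is Brunnian if deleting any single strand (the homomorphism $PB_n\to PB_{n-1}$ sending $b_{ij}\mapsto 1$ if $m\in\{i,j\}$ and relabelling indices $>m$ down by one otherwise) gives the trivial braid, for every strand $m$. $G_n^3$ is the group with generators $a_{ijk}$, one for each $3$-element subset $\{i,j,k\}\subset\{1,\dots,n\}$ (symmetric in the indices), and relations $a_{ijk}^2=1$; $a_{ijk}a_{stu}=a_{stu}a_{ijk}$ if $|\{i,j,k\}\cap\{s,t,u\}|<2$; $a_{ijk}a_{ijl}a_{ikl}a_{jkl}=a_{jkl}a_{ikl}a_{ijl}a_{ijk}$ for distinct $i,j,k,l$. For $1\le i<j\le n$ let $c_{i,j}=a_{i,j,j+1}\cdots a_{i,j,n}\,a_{i,j,1}\cdots a_{i,j,j-1}$ (factor with third index $i$ omitted), and let $\phi_n\colon PB_n\to G_n^3$ be the homomorphism $\phi_n(b_{ij})=c_{i,i+1}^{-1}\cdots c_{i,j-1}^{-1}c_{i,j}^2c_{i,j-1}\cdots c_{i,i+1}$. Fix distinct $i,j,k$. Let $F$ be the group generated by all maps $\sigma\colon\{1,\dots,n\}\setminus\{i,j,k\}\to\mathbb{Z}_2\times\mathbb{Z}_2$ subject only to $\sigma^2=1$ (a free product of $2^{2(n-3)}$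 copies of $\mathbb{Z}_2$). For a word $w$ in the generators of $G_n^3$ and each occurrence $c$ of the letter $a_{ijk}$ in $w$, define $i_c\colon\{1,\dots,n\}\setminus\{i,j,k\}\to\mathbb{Z}_2\times\mathbb{Z}_2$ by $i_c(l)=(N_{jkl}+N_{ijl},\,N_{ikl}+N_{ijl})\bmod 2$, where $N_{stu}$ is the number of occurrences of $a_{stu}$ in $w$ before $c$. If $c_1,\dots,c_m$ are the occurrences of $a_{ijk}$ in $w$ in order, set $\phi_{(i,j,k)}(w)=i_{c_1}i_{c_2}\cdots i_{c_m}\in F$. It is a standing fact from the paper that on the subgroup of even elements of $G_n^3$, which contains $\phi_n(PB_n)$, this value depends only on the group element represented by $w$; thus $\phi_{(i,j,k)}\circ\phi_n\colon PB_n\to F$ is well defined. *)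

(* Defs.v *)
From mathcomp Require Import all_boot.
Set Implicit Arguments. Unset Strict Implicit. Unset Printing Implicit Defensive.

(* Congruence on words generated by a set of defining relations R :
   the group (or monoid) presented by these relations. *)
Inductive wcong (A : Type) (R : seq A -> seq A -> Prop) : seq A -> seq A -> Prop :=
| wcong_step : forall u v l r, R l r -> wcong R (u ++ l ++ v) (u ++ r ++ v)
| wcong_refl : forall w, wcong R w w
| wcong_sym : forall w1 w2, wcong R w1 w2 -> wcong R w2 w1
| wcong_trans : forall w1 w2 w3, wcong R w1 w2 -> wcong R w2 w3 -> wcong R w1 w3.

(* ---------- Braid group B_n (Artin presentation) ----------
   letter (k, true) = sigma_k, (k, false) = sigma_k^{-1}, 1 <= k <= n-1. *)
Definition braid_rel (n : nat) (l r : seq (nat * bool)) : Prop :=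
  (exists k b, 1 <= k <= n.-1 /\ l = [:: (k, b); (k, ~~ b)] /\ r = [::])
  \/ (exists k m, 1 <= k <= n.-1 /\ 1 <= m <= n.-1 /\ k.+1 < m /\
        l = [:: (k, true); (m, true)] /\ r = [:: (m, true); (k, true)])
  \/ (exists k, 1 <= k /\ k.+1 <= n.-1 /\
        l = [:: (k, true); (k.+1, true); (k, true)] /\
        r = [:: (k.+1, true); (k, true); (k.+1, true)]).

Definition braid_eq (n : nat) := wcong (braid_rel n).

(* ---------- Pure braid group PB_n ----------
   letter (i, j, true) = b_ij, (i, j, false) = b_ij^{-1}, 1 <= i < j <= n, with
   b_ij = sigma_{j-1} ... sigma_{i+1} sigma_i^2 sigma_{i+1}^{-1} ... sigma_{j-1}^{-1}. *)
Definition pb_letter_braid (x : nat * nat * bool) : seq (nat * bool) :=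
  let: (i, j, e) := x in
  let mid := iota i.+1 (j - i.+1) in
  [seq (k, true) | k <- rev mid] ++ [:: (i, e); (i, e)] ++ [seq (k, false) | k <- mid].

Definition pb_braid (w : seq (nat * nat * bool)) : seq (nat * bool) :=
  flatten (map pb_letter_braid w).

Definition pb_valid (n : nat) (w : seq (nat * nat * bool)) : bool :=
  all (fun x : nat * nat * bool => let: (i, j, _) := x in (1 <= i) && (i < j) && (j <= n)) w.

Definition pb_trivial (n : nat) (w : seq (nat * nat * bool)) : Prop :=
  braid_eq n (pb_braid w) [::].

Definition delete_strand (m : nat) (w : seq (nat * nat * bool)) : seq (nat * nat * bool) :=
  [seq (let: (i, j, e) := x in (if m < i then i.-1 else i, if m < j then j.-1 else j, e))
  | x <- w & (let: (i, j, _) := x in (i != m) && (j != m))].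

Definition brunnian (n : nat) (w : seq (nat * nat * bool)) : Prop :=
  forall m, 1 <= m <= n -> pb_trivial n.-1 (delete_strand m w).

(* ---------- Words in G_n^3 ----------
   generator a_{ijk} is represented by the sorted list of its 3 indices;
   since a_{ijk}^2 = 1, inverses of words are reversed words. *)
Definition gkey (i j k : nat) : seq nat := sort leq [:: i; j; k].

(* c_{i,j} = a_{i,j,j+1} ... a_{i,j,n} a_{i,j,1} ... a_{i,j,j-1}, third index i omitted *)
Definition c_word (n i j : nat) : seq (seq nat) :=
  [seq gkey i j l | l <- iota j.+1 (n - j) ++ iota 1 j.-1 & l != i].

Definition phi_gen_word (n i j : nat) : seq (seq nat) :=
  let P := flatten [seq rev (c_word n i l) | l <- iota i.+1 (j - i.+1)] in
  P ++ c_word n i j ++ c_word n i j ++ rev P.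

Definition phi_n (n : nat) (w : seq (nat * nat * bool)) : seq (seq nat) :=
  flatten [seq (let: (i, j, e) := x in
                if e then phi_gen_word n i j else rev (phi_gen_word n i j)) | x <- w].

(* ---------- The group F and the map phi_(i,j,k) ----------
   A map sigma : {1..n} \ {i,j,k} -> Z_2 x Z_2 is represented by its list of values
   on the increasing enumeration of {1..n} \ {i,j,k} (Z_2 = bool, addition = xor/odd). *)
Definition F_dom (n i j k : nat) : seq nat := [seq l <- iota 1 n | l \notin [:: i; j; k]].

Definition ic (n i j k : nat) (pre : seq (seq nat)) : seq (bool * bool) :=
  [seq (odd (count_mem (gkey j k l) pre + count_mem (gkey i j l) pre),
        odd (count_mem (gkey i k l) pre + count_mem (gkey i j l) pre))
  | l <- F_dom n i j k].

Definition phi_ijk (n i j k : nat) (w : seq (seq nat)) : seq (seq (bool * bool)) :=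
  [seq ic n i j k (take p w) | p <- iota 0 (size w) & nth [::] w p == gkey i j k].

(* F = free product of copies of Z_2, one for each map sigma: relations sigma^2 = 1 *)
Definition F_rel (l r : seq (seq (bool * bool))) : Prop :=
  exists x, l = [:: x; x] /\ r = [::].

Definition F_trivial (w : seq (seq (bool * bool))) : Prop := wcong F_rel w [::].

(* Main.v *)
Require Import Defs.
From mathcomp Require Import all_boot.
From mathcomp Require Import zify.
From Stdlib Require Import FunctionalExtensionality.

Module P1.
Set Implicit Arguments. Unset Strict Implicit. Unset Printing Implicit Defensive.

Notation L := (seq (bool * bool)).
Notation Feq := (wcong F_rel).

Lemma Fctx (a b x y : seq L) : Feq a b -> Feq (x ++ a ++ y) (x ++ b ++ y).
Proof.
elim=> [u v l r H| w | w1 w2 _ IH | w1 w2 w3 _ IH1 _ IH2].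
- by have := @wcong_step _ _ (x ++ u) (v ++ y) _ _ H; rewrite -!catA.
- exact: wcong_refl.
- exact: wcong_sym.
- exact: wcong_trans IH2.
Qed.

Lemma Fcat (a b c d : seq L) : Feq a b -> Feq c d -> Feq (a ++ c) (b ++ d).
Proof.
move=> H1 H2; apply: (@wcong_trans _ _ _ (b ++ c)).
  exact: (Fctx [::] c H1).
have h := Fctx b [::] H2; by rewrite !cats0 in h.
Qed.

Lemma Fxx (x : L) (v : seq L) : Feq (x :: x :: v) v.
Proof.
apply: (@wcong_step _ F_rel [::] v [:: x; x] [::]); by exists x.
Qed.

Lemma Fxx_in (x : L) (u v : seq L) : Feq (u ++ x :: x :: v) (u ++ v).
Proof. have h := Fctx u [::] (Fxx x v); by rewrite !cats0 in h. Qed.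

Lemma Frev (v : seq L) : Feq (v ++ rev v) [::].
Proof.
elim: v => [|x v IH] /=; first exact: wcong_refl.
rewrite rev_cons -cats1 catA.
have H := Fcat (Fcat (wcong_refl F_rel [:: x]) IH) (wcong_refl F_rel [:: x]).
apply: wcong_trans H _ => /=.
exact: (Fxx x [::]).
Qed.

Lemma Frev' (v : seq L) : Feq (rev v ++ v) [::].
Proof. have h := Frev (rev v); by rewrite revK in h. Qed.

Lemma Fsym (a b : seq L) : Feq a b -> Feq b a.
Proof. exact: wcong_sym. Qed.
Lemma Ftrans (a b c : seq L) : Feq a b -> Feq b c -> Feq a c.
Proof. exact: wcong_trans. Qed.
Lemma Frefl (a : seq L) : Feq a a.
Proof. exact: wcong_refl. Qed.

Section Phi.
Variables (n i j k : nat).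
Local Notation key := (gkey i j k).
Local Notation icc := (ic n i j k).

Fixpoint phiR (u v : seq (seq nat)) : seq L :=
  match v with
  | [::] => [::]
  | x :: v' => (if x == key then [:: icc u] else [::]) ++ phiR (rcons u x) v'
  end.

Lemma phiR_gen u v :
  [seq icc (u ++ take p v) | p <- iota 0 (size v) & nth [::] v p == key] = phiR u v.
Proof.
elim: v u => [|x v IH] u //=.
rewrite -add1n iotaDl filter_map /=.
rewrite -(IH (rcons u x)).
case: (x == key) => /=; rewrite ?cats0 ?take0 -map_comp.
  congr (_ :: _); apply: eq_map => p /=; by rewrite cat_rcons.
apply: eq_map => p /=; by rewrite cat_rcons.
Qed.

Lemma phi_ijkE w : phi_ijk n i j k w = phiR [::] w.
Proof. by rewrite /phi_ijk -phiR_gen. Qed.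

Lemma phiR_cat u v1 v2 : phiR u (v1 ++ v2) = phiR u v1 ++ phiR (u ++ v1) v2.
Proof.
elim: v1 u => [|x v1 IH] u /=; first by rewrite cats0.
by rewrite IH -catA cat_rcons.
Qed.

Definition peqT (u u' : seq (seq nat)) :=
  forall y, y != key -> odd (count_mem y u) = odd (count_mem y u').

Lemma gkey_mem a b c : a \in gkey a b c /\ b \in gkey a b c /\ c \in gkey a b c.
Proof. by rewrite /gkey !mem_sort !inE !eqxx !orbT. Qed.

Lemma gkey_neq_key a b l : l \notin [:: i; j; k] -> gkey a b l != key.
Proof.
move=> hl; apply/eqP => E.
have [_ [_ h]] := gkey_mem a b l.
by move: h; rewrite E /gkey mem_sort (negbTE hl).
Qed.

Lemma ic_peq u u' : peqT u u' -> icc u = icc u'.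
Proof.
move=> H; rewrite /ic; apply/eq_in_map => l.
rewrite mem_filter => /andP[hl _].
by rewrite !oddD !H ?gkey_neq_key.
Qed.

Lemma peqT_rcons u u' x : peqT u u' -> peqT (rcons u x) (rcons u' x).
Proof. move=> H y hy; by rewrite -!cats1 !count_cat !oddD H. Qed.

Lemma phiR_peq u u' v : peqT u u' -> phiR u v = phiR u' v.
Proof.
elim: v u u' => [|x v IH] u u' H //=.
rewrite (ic_peq H) (IH _ (rcons u' x)) //; exact: peqT_rcons.
Qed.

Lemma phiR_rev u u' v : peqT u' (u ++ v) -> phiR u (rev v) = rev (phiR u' v).
Proof.
elim: v u u' => [|x v IH] u u' H //=.
rewrite rev_cons -cats1 phiR_cat rev_cat (IH u (rcons u' x)); last first.
  move=> y hy; rewrite -cats1 !count_cat /= !oddD H // !count_cat /= !oddD.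
  by case: (odd (count_mem y u)); case: (odd (count_mem y v)); case: (x == y).
congr (_ ++ _) => /=; case: eqP => // ex /=.
congr [:: _]; apply: ic_peq => y hy.
rewrite H // !count_cat count_rev /= ex.
have -> : (key == y) = false by apply/eqP => ey; move: hy; rewrite ey eqxx.
by rewrite add0n.
Qed.

Lemma phiR_nokey u v : key \notin v -> phiR u v = [::].
Proof.
elim: v u => [|x v IH] u //=; rewrite inE negb_or => /andP[hx hv].
by rewrite eq_sym (negbTE hx) IH.
Qed.

Lemma phiR_onekey u v1 v2 : key \notin v1 -> key \notin v2 ->
  phiR u (v1 ++ key :: v2) = [:: icc (u ++ v1)].
Proof.
move=> h1 h2; rewrite phiR_cat phiR_nokey //= eqxx phiR_nokey //.
Qed.

End Phi.

End P1.
Import P1.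

Module P2.
Set Implicit Arguments. Unset Strict Implicit. Unset Printing Implicit Defensive.

Section Dec.
Variables (n i j k : nat).
Local Notation key := (gkey i j k).
Local Notation icc := (ic n i j k).
Local Notation phiR := (phiR n i j k).
Local Notation peqT := (peqT i j k).

Definition gw (x : nat * nat * bool) : seq (seq nat) :=
  let: (a, b, e) := x in if e then phi_gen_word n a b else rev (phi_gen_word n a b).

Definition fx (x : nat * nat * bool) := phiR [::] (gw x).

Definition PP a b := flatten [seq rev (c_word n a l) | l <- iota a.+1 (b - a.+1)].

Lemma pgwE a b : phi_gen_word n a b = PP a b ++ c_word n a b ++ c_word n a b ++ rev (PP a b).
Proof. by []. Qed.

Lemma gw_even x y : ~~ odd (count_mem y (gw x)).
Proof.
case: x => [[a b] e]; rewrite /gw; case: e; rewrite ?count_rev pgwE !count_cat count_rev;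
by rewrite !oddD; case: (odd (count_mem y (PP a b))); case: (odd (count_mem y (c_word n a b))).
Qed.

Lemma phi_n_decomp w : phi_ijk n i j k (phi_n n w) = flatten [seq fx x | x <- w].
Proof.
rewrite phi_ijkE.
suff H : forall u, peqT u [::] -> phiR u (phi_n n w) = flatten [seq fx x | x <- w].
  by apply: H.
elim: w => [|x w IH] u hu //=.
rewrite /phi_n /= phiR_cat.
have -> : (let: (i0, j0, e) := x in if e then phi_gen_word n i0 j0 else rev (phi_gen_word n i0 j0)) = gw x by [].
rewrite /fx (@phiR_peq n i j k u [::] (gw x) hu); congr (_ ++ _); apply: IH => y hy.
by rewrite count_cat oddD hu // (negbTE (gw_even x y)).
Qed.

Definition SS a b := phiR [::] (PP a b).
Definition XX a b := phiR (PP a b) (c_word n a b).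
Definition YY a b := phiR (PP a b ++ c_word n a b) (c_word n a b).

Lemma fT_form a b : fx (a, b, true) = SS a b ++ XX a b ++ YY a b ++ rev (SS a b).
Proof.
rewrite /fx /= pgwE !phiR_cat /= !catA.
rewrite (@phiR_rev _ _ _ _ _ [::]); first by rewrite /SS /XX /YY -!catA.
move=> y hy; rewrite !count_cat !oddD.
by case: (odd (count_mem y (PP a b))); case: (odd (count_mem y (c_word n a b))).
Qed.

Lemma fF_form a b : fx (a, b, false) = SS a b ++ rev (YY a b) ++ rev (XX a b) ++ rev (SS a b).
Proof.
rewrite /fx /= pgwE !rev_cat revK !phiR_cat /= -!catA.
rewrite (@phiR_rev n i j k (PP a b ++ rev (c_word n a b) ++ rev (c_word n a b)) [::] (PP a b)); last first.
  move=> y hy; rewrite !count_cat !count_rev !oddD.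
  by case: (odd (count_mem y (PP a b))); case: (odd (count_mem y (c_word n a b))).
rewrite (@phiR_rev n i j k (PP a b) (PP a b ++ c_word n a b) (c_word n a b)); last first.
  by move=> y hy; rewrite !count_cat.
rewrite (@phiR_rev n i j k (PP a b ++ rev (c_word n a b)) (PP a b) (c_word n a b)); last first.
  move=> y hy; rewrite !count_cat !count_rev !oddD.
  by case: (odd (count_mem y (PP a b))); case: (odd (count_mem y (c_word n a b))).
by rewrite /SS /XX /YY !catA.
Qed.

End Dec.

End P2.
Import P2.

Module P3.
Set Implicit Arguments. Unset Strict Implicit. Unset Printing Implicit Defensive.

Definition swap (k x : nat) : nat := if x == k then k.+1 else if x == k.+1 then k else x.

Lemma swap_inj k : injective (swap k).
Proof. move=> x y; rewrite /swap; do ! case: eqP; lia. Qed.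

Lemma swapK k x : swap k (swap k x) = x.
Proof. rewrite /swap; do ! case: eqP; lia. Qed.

Section Model.
Variable lab : nat -> option (seq L).

Definition E2 (o1 o2 : option (seq L)) (left : bool) : seq L :=
  match o1, o2 with Some u, Some v => if left then u else v | _, _ => [::] end.

Definition em (pi : nat -> nat) (c : nat * bool) : seq L :=
  E2 (lab (pi c.1)) (lab (pi c.1.+1)) c.2.

Fixpoint emit (pi : nat -> nat) (s : seq (nat * bool)) : seq L :=
  match s with [::] => [::] | c :: s' => em pi c ++ emit (pi \o swap c.1) s' end.

Fixpoint fin (pi : nat -> nat) (s : seq (nat * bool)) : nat -> nat :=
  match s with [::] => pi | c :: s' => fin (pi \o swap c.1) s' end.

Lemma emit_cat pi s1 s2 : emit pi (s1 ++ s2) = emit pi s1 ++ emit (fin pi s1) s2.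
Proof. by elim: s1 pi => [|c s1 IH] pi //=; rewrite IH catA. Qed.

Lemma fin_cat pi s1 s2 : fin pi (s1 ++ s2) = fin (fin pi s1) s2.
Proof. by elim: s1 pi => [|c s1 IH] pi //=. Qed.

Lemma fin_inj pi s : injective pi -> injective (fin pi s).
Proof.
elim: s pi => [|c s IH] pi hpi //=; apply: IH.
by move=> x y /= /hpi /swap_inj.
Qed.

Variables (t1 t2 t3 : nat).
Hypothesis labS : forall x u, lab x = Some u -> x \in [:: t1; t2; t3].
Hypothesis labI : forall x u, lab x = Some u -> Feq (u ++ u) [::].

Lemma rel_inv N l r : braid_rel N l r -> forall pi, injective pi ->
  fin pi l = fin pi r /\ Feq (emit pi l) (emit pi r).
Proof.
case=> [[k [b [_ [-> ->]]]] | [[k [m [_ [_ [hkm [-> ->]]]]]] | [k [_ [_ [-> ->]]]]]] pi hpi.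
- split.
    by apply: functional_extensionality => x /=; rewrite swapK.
  rewrite /= /em /=.
  have -> : swap k k = k.+1 by rewrite /swap eqxx.
  have -> : swap k k.+1 = k by rewrite /swap; case: eqP; [lia | rewrite eqxx].
  case ha: (lab (pi k)) => [ua|]; case hb: (lab (pi k.+1)) => [ub|]; case: b => /=;
    rewrite ?cats0; try exact: Frefl.
  + exact: labI ha.
  + exact: labI hb.
- have s1 : swap k m = m by rewrite /swap; do ! case: eqP; lia.
  have s2 : swap k m.+1 = m.+1 by rewrite /swap; do ! case: eqP; lia.
  have s3 : swap m k = k by rewrite /swap; do ! case: eqP; lia.
  have s4 : swap m k.+1 = k.+1 by rewrite /swap; do ! case: eqP; lia.
  split.
    apply: functional_extensionality => x /=; congr pi.
    rewrite /swap; do ! case: eqP; lia.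
  rewrite /= /em /= s1 s2 s3 s4 !cats0.
  case ha: (lab (pi k)) => [ua|]; case hb: (lab (pi k.+1)) => [ub|];
  case hc: (lab (pi m)) => [uc|]; case hd: (lab (pi m.+1)) => [ud|] /=;
    rewrite ?cats0; try exact: Frefl.
  exfalso.
  have hu : uniq [:: pi k; pi k.+1; pi m; pi m.+1].
    rewrite (map_inj_uniq hpi [:: k; k.+1; m; m.+1]) /= !inE; lia.
  have hsub : {subset [:: pi k; pi k.+1; pi m; pi m.+1] <= [:: t1; t2; t3]}.
    move=> x; rewrite !inE => /or4P [] /eqP ->.
    + by move: (labS ha); rewrite !inE.
    + by move: (labS hb); rewrite !inE.
    + by move: (labS hc); rewrite !inE.
    + by move: (labS hd); rewrite !inE.
  by have := uniq_leq_size hu hsub.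
- split.
    apply: functional_extensionality => x /=; congr pi.
    rewrite /swap; do ! case: eqP; lia.
  rewrite /= /em /=.
  have e1 : swap k k = k.+1 by rewrite /swap eqxx.
  have e2 : swap k k.+1 = k by rewrite /swap; case: eqP; [lia | rewrite eqxx].
  have e3 : swap k k.+2 = k.+2 by rewrite /swap; do ! case: eqP; lia.
  have e4 : swap k.+1 k = k by rewrite /swap; do ! case: eqP; lia.
  have e5 : swap k.+1 k.+1 = k.+2 by rewrite /swap eqxx.
  have e6 : swap k.+1 k.+2 = k.+1 by rewrite /swap; do ! case: eqP; lia.
  rewrite ?e1 ?e2 ?e3 ?e4 ?e5 ?e6 ?e1 ?e2 ?e3 ?e4 ?e5 ?e6 !cats0.
  case ha: (lab (pi k)) => [ua|]; case hb: (lab (pi k.+1)) => [ub|];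
  case hc: (lab (pi k.+2)) => [uc|] /=;
    rewrite ?cats0; try exact: Frefl.
  apply: Ftrans (_ : Feq _ ub) _.
    have h := Fcat (labI ha) (Frefl ub); by rewrite catA.
  apply: Fsym; have h := Fcat (Frefl ub) (labI ha); by rewrite cats0 in h.
Qed.

Lemma cong_inv N s1 s2 : wcong (braid_rel N) s1 s2 -> forall pi, injective pi ->
  fin pi s1 = fin pi s2 /\ Feq (emit pi s1) (emit pi s2).
Proof.
elim=> [u v l r H | w | w1 w2 _ IH | w1 w2 w3 _ IH1 _ IH2] pi hpi.
- have [e1 e2] := rel_inv H (@fin_inj pi u hpi).
  rewrite !emit_cat !fin_cat e1; split => //.
  apply: Fcat; first exact: Frefl.
  apply: Fcat => //; exact: Frefl.
- split => //; exact: Frefl.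
- have [e1 e2] := IH pi hpi; split => //; exact: Fsym.
- have [e1 e2] := IH1 pi hpi; have [e3 e4] := IH2 pi hpi.
  split; [by rewrite e1 | exact: Ftrans e4].
Qed.

End Model.

End P3.
Import P3.

Module P4.
Set Implicit Arguments. Unset Strict Implicit. Unset Printing Implicit Defensive.

Section PB.
Variable lab : nat -> option (seq L).
Local Notation emit := (emit lab).

Definition mv (c b : nat) : nat -> nat :=
  fun x => if x == c then b else if (c < x) && (x <= b) then x.-1 else x.

Lemma mv_id b : mv b b = id.
Proof. apply: functional_extensionality => x; rewrite /mv; case: eqP => [->//|]; case: ifP => //; lia. Qed.

Lemma mv_step c b : c < b -> (mv c.+1 b) \o swap c = mv c b.
Proof.
move=> h; apply: functional_extensionality => x /=; rewrite /mv /swap.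
case: (eqVneq x c) => [e|hxc]; first by subst x; rewrite eqxx.
case: (eqVneq x c.+1) => [e|hxc1]; first subst x.
  have -> : (c == c.+1) = false by lia.
  have -> : (c.+1 < c) && (c <= b) = false by lia.
  have -> : (c < c.+1) && (c.+1 <= b) = true by lia.
  by [].
have -> : (x == c.+1) = false by lia.
have -> : (c.+1 < x) = (c < x) by lia.
by [].
Qed.

Lemma mv_step' c b : c < b -> (mv c b) \o swap c = mv c.+1 b.
Proof.
move=> h; rewrite -(mv_step h); apply: functional_extensionality => x /=; by rewrite swapK.
Qed.

Lemma mv_at c b : mv c b c = b.
Proof. by rewrite /mv eqxx. Qed.
Lemma mv_below c b x : x < c -> mv c b x = x.
Proof. move=> h; rewrite /mv; have -> : (x == c) = false by lia.
  by have -> : (c < x) && (x <= b) = false by lia. Qed.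
Lemma mv_above c b x : c < x <= b -> mv c b x = x.-1.
Proof. move=> h; rewrite /mv; have -> : (x == c) = false by lia.
  by have -> : (c < x) && (x <= b) = true by lia. Qed.

Lemma phase1 b d c : c + d <= b ->
  emit (mv (c + d) b) [seq (x, true) | x <- rev (iota c d)] =
    flatten [seq E2 (lab x) (lab b) true | x <- rev (iota c d)] /\
  fin (mv (c + d) b) [seq (x, true) | x <- rev (iota c d)] = mv c b.
Proof.
elim: d c => [|d IH] c h; first by rewrite addn0.
rewrite /= rev_cons -!cats1 !map_cat emit_cat fin_cat flatten_cat.
have hh : c.+1 + d <= b by lia.
have [e1 e2] := IH c.+1 hh.
rewrite addnS -addSn e1 e2 /= /em /= mv_at mv_below // mv_step; last by lia.
by rewrite cats0.
Qed.

Lemma phase3 b d c : c + d <= b ->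
  emit (mv c b) [seq (x, false) | x <- iota c d] =
    flatten [seq E2 (lab b) (lab x) false | x <- iota c d] /\
  fin (mv c b) [seq (x, false) | x <- iota c d] = mv (c + d) b.
Proof.
elim: d c => [|d IH] c h; first by rewrite addn0.
rewrite /= /em /= mv_at mv_above; last by lia.
rewrite mv_step'; last by lia.
have hh : c.+1 + d <= b by lia.
have [e1 e2] := IH c.+1 hh.
by rewrite e1 e2 addSnnS.
Qed.

Definition Em (a b : nat) (e : bool) :=
  flatten [seq E2 (lab x) (lab b) true | x <- rev (iota a.+1 (b - a.+1))] ++
  (E2 (lab a) (lab b) e ++ E2 (lab b) (lab a) e) ++
  flatten [seq E2 (lab b) (lab x) false | x <- iota a.+1 (b - a.+1)].

Lemma letter_model a b e : a < b ->
  emit id (pb_letter_braid (a, b, e)) = Em a b e /\ fin id (pb_letter_braid (a, b, e)) = id.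
Proof.
move=> hab; rewrite /pb_letter_braid -{1 2}(mv_id b).
have hb : a.+1 + (b - a.+1) = b by lia.
have hh : a.+1 + (b - a.+1) <= b by lia.
have [e1 e2] := phase1 hh.
rewrite hb in e1 e2.
rewrite !emit_cat !fin_cat e1 e2.
have [e3 e4] := phase3 hh.
have f2 : fin (mv a.+1 b) [:: (a, e); (a, e)] = mv a.+1 b by rewrite /= mv_step // mv_step'.
have m2 : emit (mv a.+1 b) [:: (a, e); (a, e)] = E2 (lab a) (lab b) e ++ E2 (lab b) (lab a) e.
  have sa1 : swap a a = a.+1 by rewrite /swap eqxx.
  have sa2 : swap a a.+1 = a by rewrite /swap; case: eqP; [lia | rewrite eqxx].
  rewrite /= /em /= sa1 sa2 cats0 mv_at !mv_below //.
rewrite f2 m2 e3 e4 hb mv_id /Em; split => //.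
Qed.

Definition pb_ok (w : seq (nat * nat * bool)) :=
  all (fun x : nat * nat * bool => let: (a, b, _) := x in a < b) w.

Lemma braid_model w : pb_ok w ->
  emit id (pb_braid w) = flatten [seq (let: (a, b, e) := x in Em a b e) | x <- w].
Proof.
elim: w => [|[[a b] e] w IH] //= /andP[hab hw].
rewrite /pb_braid /= emit_cat.
have [e1 e2] := letter_model e hab.
by rewrite e1 e2 -IH.
Qed.

End PB.

End P4.
Import P4.

Module P5.
Set Implicit Arguments. Unset Strict Implicit. Unset Printing Implicit Defensive.

Lemma gkey_eq a b c x y z : (gkey a b c == gkey x y z) = perm_eq [:: a; b; c] [:: x; y; z].
Proof. apply/eqP/idP => /(perm_sortP leq_total leq_trans anti_leq) //. Qed.

Lemma gkeyC a b c : gkey a b c = gkey b a c.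
Proof. apply/(perm_sortP leq_total leq_trans anti_leq); apply/permP => p /=; by rewrite addnCA. Qed.

Lemma gkeyR a b c : gkey a b c = gkey a c b.
Proof. apply/(perm_sortP leq_total leq_trans anti_leq); apply/permP => p /=; by rewrite (addnCA (p b)). Qed.

Lemma gkey_in a b c : [/\ a \in gkey a b c, b \in gkey a b c & c \in gkey a b c].
Proof. by rewrite /gkey !mem_sort !inE !eqxx !orbT. Qed.

Lemma perm1 (m l : nat) : perm_eq [:: m] [:: l] = (m == l).
Proof. apply/idP/idP => [/perm_mem h|/eqP -> //].
  by have := h m; rewrite !inE eqxx /= => /esym. Qed.

Lemma seg_pair a b m l : (gkey a b m == gkey a b l) = (m == l).
Proof. by rewrite gkey_eq !perm_cons perm1. Qed.

Lemma cw_pair a l' m o l : o != l ->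
  (gkey a l' m == gkey a o l) = if l' == o then m == l else if l' == l then m == o else false.
Proof.
move=> hol; rewrite gkey_eq perm_cons.
case: (eqVneq l' o) => [->|hlo]; first by rewrite perm_cons perm1.
case: (eqVneq l' l) => [->|hll].
  have e : perm_eq [:: o; l] [:: l; o] by apply/permP => p /=; rewrite addnCA.
  by rewrite (perm_sym [:: l; m]) (permPl e) perm_sym perm_cons perm1.
apply/negP => /perm_mem h; have := h l'; rewrite !inE eqxx /= => /esym.
by rewrite (negbTE hlo) (negbTE hll).
Qed.

Lemma count_iota v s len : count_mem v (iota s len) = (s <= v) && (v < s + len).
Proof. by rewrite count_uniq_mem ?iota_uniq // mem_iota. Qed.

Lemma count0_mem (K : seq nat) (s : seq (seq nat)) a :
  (forall y, y \in s -> a \in y) -> a \notin K -> count_mem K s = 0.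
Proof.
move=> H hK; apply/count_memPn; apply/negP => /H; by rewrite (negbTE hK).
Qed.

Definition seg a b (s : seq nat) := [seq gkey a b m | m <- s & m != a].

Lemma seg_cat a b s1 s2 : seg a b (s1 ++ s2) = seg a b s1 ++ seg a b s2.
Proof. by rewrite /seg filter_cat map_cat. Qed.

Lemma seg_mem a b s y : y \in seg a b s -> a \in y /\ b \in y.
Proof. by case/mapP => m _ ->; have [h1 h2 _] := gkey_in a b m. Qed.

Lemma seg_same a b l s : l != a -> count_mem (gkey a b l) (seg a b s) = count_mem l s.
Proof.
move=> hl; rewrite /seg count_map count_filter; apply: eq_count => m /=.
rewrite seg_pair; case: eqP => // ->; by rewrite hl.
Qed.

Lemma seg_zero (a b : nat) (s : seq nat) (K : seq nat) : (a \notin K) || (b \notin K) -> count_mem K (seg a b s) = 0.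
Proof.
case/orP => h.
  by apply: (count0_mem (a:=a)) => // y /seg_mem [].
by apply: (count0_mem (a:=b)) => // y /seg_mem [].
Qed.

Section Cnt.
Variable n : nat.

Definition Rng (b : nat) := iota b.+1 (n - b) ++ iota 1 b.-1.

Lemma cwE a b : c_word n a b = seg a b (Rng b).
Proof. by []. Qed.

Lemma count_Rng v b : 1 <= v <= n -> v != b -> count_mem v (Rng b) = 1.
Proof. move=> h1 h2; rewrite /Rng count_cat !count_iota; lia. Qed.

Lemma cw_count a o l l' : o != l -> o != a -> l != a -> 1 <= o <= n -> 1 <= l <= n ->
  count_mem (gkey a o l) (c_word n a l') = (l' == o) || (l' == l).
Proof.
move=> hol hoa hla ho hl; rewrite cwE /seg count_map count_filter.
case: (eqVneq l' o) => [e|hlo].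
  subst l'; rewrite (eq_count (a2 := pred1 l)); first by rewrite count_Rng // eq_sym.
  by move=> m /=; rewrite cw_pair // eqxx; case: eqP => // ->; rewrite hla.
case: (eqVneq l' l) => [e|hll].
  subst l'; rewrite (eq_count (a2 := pred1 o)); first by rewrite count_Rng.
  by move=> m /=; rewrite cw_pair // (negbTE hlo) eqxx; case: eqP => // ->; rewrite hoa.
rewrite (eq_count (a2 := pred0)) ?count_pred0 //.
by move=> m /=; rewrite cw_pair // (negbTE hlo) (negbTE hll).
Qed.

Lemma count_or (o l : nat) s : o != l ->
  count (fun x => (x == o) || (x == l)) s = count_mem o s + count_mem l s.
Proof.
move=> h; elim: s => [|x s IH] //=; rewrite IH.
case: (eqVneq x o) => [->|]; first by rewrite (negbTE h) /=; lia.
by case: (x == l) => /= _; lia.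
Qed.

Lemma PP_count a b o l : o != l -> o != a -> l != a -> 1 <= o <= n -> 1 <= l <= n ->
  count_mem (gkey a o l) (PP n a b) =
  count_mem o (iota a.+1 (b - a.+1)) + count_mem l (iota a.+1 (b - a.+1)).
Proof.
move=> hol hoa hla ho hl; rewrite /PP count_flatten -map_comp -count_or //.
elim: (iota _ _) => [|x s IH] //=; rewrite IH count_rev cw_count //.
Qed.

Lemma PP_zero (a b : nat) (K : seq nat) : a \notin K -> count_mem K (PP n a b) = 0.
Proof.
move=> h; apply: (count0_mem (a:=a)) => // y.
rewrite /PP => /flattenP [s /mapP [l' _ ->]]; rewrite mem_rev cwE => /seg_mem [] //.
Qed.

Lemma cw_zero (a b : nat) (K : seq nat) : (a \notin K) || (b \notin K) -> count_mem K (c_word n a b) = 0.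
Proof. by rewrite cwE; apply: seg_zero. Qed.

Lemma cw_same a b l : 1 <= l <= n -> l != a -> l != b -> count_mem (gkey a b l) (c_word n a b) = 1.
Proof. by move=> h1 h2 h3; rewrite cwE seg_same // count_Rng. Qed.

End Cnt.

Lemma PP_mem n a b y : y \in PP n a b -> a \in y.
Proof. by move/flattenP => [s /mapP [l' _ ->]]; rewrite mem_rev cwE => /seg_mem []. Qed.

Lemma cw_mem n a b y : y \in c_word n a b -> a \in y /\ b \in y.
Proof. by rewrite cwE => /seg_mem. Qed.

Lemma gw_mem n a b e y : y \in gw n (a, b, e) -> a \in y.
Proof.
rewrite /gw; case: e; rewrite ?mem_rev pgwE !mem_cat !mem_rev.
  by case/or4P => [/PP_mem|/cw_mem []|/cw_mem []|/PP_mem].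
by case/or4P => [/PP_mem|/cw_mem []|/cw_mem []|/PP_mem].
Qed.

End P5.
Import P5.

Module P6.
Set Implicit Arguments. Unset Strict Implicit. Unset Printing Implicit Defensive.

Lemma iota_split st len z : st <= z < st + len ->
  iota st len = iota st (z - st) ++ z :: iota z.+1 (st + len - z.+1).
Proof.
move=> h; have e : len = (z - st) + (st + len - z.+1).+1 by lia.
rewrite {1}e iotaD; congr (_ ++ _); have -> : st + (z - st) = z by lia.
by [].
Qed.

Ltac evb := repeat match goal with |- context[(?x <= ?y) && (?y < ?z)] =>
  let h := fresh in
  first [ have h : ((x <= y) && (y < z)) = true by lia
        | have h : ((x <= y) && (y < z)) = false by lia ]; rewrite h; clear h end.

Section Vals.
Variables (n i j k s1 s2 s3 : nat).
Hypothesis hs : [/\ 1 <= s1, s1 < s2, s2 < s3 & s3 <= n].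
Hypothesis hkey : gkey i j k = [:: s1; s2; s3].
Hypothesis hT : forall x, (x \in [:: i; j; k]) = (x \in [:: s1; s2; s3]).
Hypothesis hij : [/\ i != j, j != k & i != k].
Local Notation key := (gkey i j k).
Local Notation icc := (ic n i j k).
Local Notation phiR := (phiR n i j k).
Local Notation PP := (PP n).
Local Notation XX := (XX n i j k).
Local Notation YY := (YY n i j k).
Local Notation SS := (SS n i j k).

Lemma key123 : gkey s1 s2 s3 = key.
Proof. rewrite hkey /gkey (sorted_sort leq_trans) //=; case: hs => *; lia. Qed.
Lemma key132 : gkey s1 s3 s2 = key.
Proof. by rewrite -gkeyR key123. Qed.
Lemma key231 : gkey s2 s3 s1 = key.
Proof. by rewrite gkeyR -gkeyC key123. Qed.

Lemma seg_nokey a b z s : z \notin s -> gkey a b z \notin seg a b s.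
Proof.
move=> hz; apply/mapP => [[m]]; rewrite mem_filter => /andP[_ hm] /eqP.
rewrite eq_sym seg_pair => /eqP e; subst m; by rewrite hm in hz.
Qed.

Lemma seg_split a b s1' z s2' : z != a ->
  seg a b (s1' ++ z :: s2') = seg a b s1' ++ gkey a b z :: seg a b s2'.
Proof. by move=> h; rewrite /seg filter_cat map_cat /= h. Qed.

Definition I12a := iota s2.+1 (s3 - s2.+1).
Definition I12b := iota s3.+1 (n - s3) ++ iota 1 s2.-1.
Definition I23a := iota s3.+1 (n - s3) ++ iota 1 s1.-1.
Definition I23b := iota s1.+1 (s3.-1 - s1).
Definition I13a := iota s3.+1 (n - s3) ++ iota 1 s2.-1.
Definition I13b := iota s2.+1 (s3.-1 - s2).

Lemma c12E : c_word n s1 s2 = seg s1 s2 I12a ++ key :: seg s1 s2 I12b.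
Proof.
case: hs => h1 h2 h3 h4.
rewrite cwE /Rng (@iota_split s2.+1 (n - s2) s3); last by lia.
rewrite -catA /= seg_split ?key123 /I12a /I12b; last by lia.
by have -> : s2.+1 + (n - s2) - s3.+1 = n - s3 by lia.
Qed.

Lemma c23E : c_word n s2 s3 = seg s2 s3 I23a ++ key :: seg s2 s3 I23b.
Proof.
case: hs => h1 h2 h3 h4.
rewrite cwE /Rng (@iota_split 1 s3.-1 s1); last by lia.
rewrite catA seg_split ?key231 /I23a /I23b; last by lia.
have -> : 1 + s3.-1 - s1.+1 = s3.-1 - s1 by lia.
by have -> : s1 - 1 = s1.-1 by lia.
Qed.

Lemma c13E : c_word n s1 s3 = seg s1 s3 I13a ++ key :: seg s1 s3 I13b.
Proof.
case: hs => h1 h2 h3 h4.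
rewrite cwE /Rng (@iota_split 1 s3.-1 s2); last by lia.
rewrite catA seg_split ?key132 /I13a /I13b; last by lia.
have -> : 1 + s3.-1 - s2.+1 = s3.-1 - s2 by lia.
by have -> : s2 - 1 = s2.-1 by lia.
Qed.

Lemma nk12a : key \notin seg s1 s2 I12a.
Proof. rewrite -key123; apply: seg_nokey; rewrite /I12a mem_iota; lia. Qed.
Lemma nk12b : key \notin seg s1 s2 I12b.
Proof. case: hs => *; rewrite -key123; apply: seg_nokey; rewrite /I12b mem_cat !mem_iota; lia. Qed.
Lemma nk23a : key \notin seg s2 s3 I23a.
Proof. case: hs => *; rewrite -key231; apply: seg_nokey; rewrite /I23a mem_cat !mem_iota; lia. Qed.
Lemma nk23b : key \notin seg s2 s3 I23b.
Proof. case: hs => *; rewrite -key231; apply: seg_nokey; rewrite /I23b !mem_iota; lia. Qed.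
Lemma nk13a : key \notin seg s1 s3 I13a.
Proof. case: hs => *; rewrite -key132; apply: seg_nokey; rewrite /I13a mem_cat !mem_iota; lia. Qed.
Lemma nk13b : key \notin seg s1 s3 I13b.
Proof. case: hs => *; rewrite -key132; apply: seg_nokey; rewrite /I13b !mem_iota; lia. Qed.

Lemma flat_nokey a s : (forall l', l' \in s -> l' \notin [:: s1; s2; s3]) ->
  key \notin flatten [seq rev (c_word n a l') | l' <- s].
Proof.
move=> H; apply/negP => /flattenP [s' /mapP [l' hl' ->]]; rewrite mem_rev cwE => /seg_mem [_ h].
have := H l' hl'; by rewrite -hkey h.
Qed.

Lemma PP_nokey a b : (forall l', a < l' < b -> l' \notin [:: s1; s2; s3]) -> key \notin PP a b.
Proof.
move=> H; apply: flat_nokey => l'; rewrite mem_iota => h; apply: H; lia.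
Qed.

Lemma nkP12 : key \notin PP s1 s2.
Proof. case: hs => *; apply: PP_nokey => l' hl; rewrite !inE; lia. Qed.
Lemma nkP23 : key \notin PP s2 s3.
Proof. case: hs => *; apply: PP_nokey => l' hl; rewrite !inE; lia. Qed.

Lemma V1 : XX s1 s2 = [:: icc (PP s1 s2 ++ seg s1 s2 I12a)].
Proof. by rewrite /XX c12E phiR_onekey // ?nk12a ?nk12b. Qed.
Lemma V2 : YY s1 s2 = [:: icc (PP s1 s2 ++ c_word n s1 s2 ++ seg s1 s2 I12a)].
Proof. by rewrite /YY {2}c12E phiR_onekey // ?nk12a ?nk12b // -catA. Qed.
Lemma V3 : XX s2 s3 = [:: icc (PP s2 s3 ++ seg s2 s3 I23a)].
Proof. by rewrite /XX c23E phiR_onekey // ?nk23a ?nk23b. Qed.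
Lemma V4 : YY s2 s3 = [:: icc (PP s2 s3 ++ c_word n s2 s3 ++ seg s2 s3 I23a)].
Proof. by rewrite /YY {2}c23E phiR_onekey // ?nk23a ?nk23b // -catA. Qed.
Lemma V6 : XX s1 s3 = [:: icc (PP s1 s3 ++ seg s1 s3 I13a)].
Proof. by rewrite /XX c13E phiR_onekey // ?nk13a ?nk13b. Qed.
Lemma V7 : YY s1 s3 = [:: icc (PP s1 s3 ++ c_word n s1 s3 ++ seg s1 s3 I13a)].
Proof. by rewrite /YY {2}c13E phiR_onekey // ?nk13a ?nk13b // -catA. Qed.

Lemma S12 : SS s1 s2 = [::].
Proof. by rewrite /SS phiR_nokey // nkP12. Qed.
Lemma S23 : SS s2 s3 = [::].
Proof. by rewrite /SS phiR_nokey // nkP23. Qed.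

Lemma PP13E : PP s1 s3 = PP s1 s2 ++ rev (c_word n s1 s2) ++ flatten [seq rev (c_word n s1 l) | l <- iota s2.+1 (s3 - s2.+1)].
Proof.
case: hs => *.
rewrite /P2.PP (@iota_split s1.+1 (s3 - s1.+1) s2); last by lia.
rewrite map_cat flatten_cat /=.
by have -> : s1.+1 + (s3 - s1.+1) - s2.+1 = s3 - s2.+1 by lia.
Qed.

Lemma V5 : SS s1 s3 = [:: icc (PP s1 s2 ++ rev (seg s1 s2 I12b))].
Proof.
case: hs => *.
rewrite /SS PP13E c12E rev_cat /= rev_cons -cats1 -!catA /= catA phiR_onekey //.
  by rewrite mem_cat negb_or nkP12 mem_rev nk12b.
rewrite mem_cat negb_or mem_rev nk12a /=.
apply: flat_nokey => l'; rewrite mem_iota !inE; lia.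
Qed.


Lemma ic_eqABC u u' : (forall l, 1 <= l <= n -> l \notin [:: s1; s2; s3] ->
  odd (count_mem (gkey s1 s2 l) u + count_mem (gkey s1 s3 l) u) =
  odd (count_mem (gkey s1 s2 l) u' + count_mem (gkey s1 s3 l) u') /\
  odd (count_mem (gkey s1 s2 l) u + count_mem (gkey s2 s3 l) u) =
  odd (count_mem (gkey s1 s2 l) u' + count_mem (gkey s2 s3 l) u')) -> icc u = icc u'.
Proof.
move=> H; rewrite /ic; apply/eq_in_map => l; rewrite /F_dom mem_filter mem_iota => /andP [hl hr].
have hl' : l \notin [:: s1; s2; s3] by rewrite -hT.
have hln : 1 <= l <= n by lia.
have [H1 H2] := H l hln hl'.
have hi : i \in [:: s1; s2; s3] by rewrite -hT !inE eqxx.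
have hj : j \in [:: s1; s2; s3] by rewrite -hT !inE eqxx orbT.
have hk : k \in [:: s1; s2; s3] by rewrite -hT !inE eqxx !orbT.
case: hij => hij1 hij2 hij3.
move: hi hj hk hij1 hij2 hij3 H1 H2; rewrite !inE.
case/or3P => /eqP ->; case/or3P => /eqP ->; case/or3P => /eqP ->; rewrite ?eqxx // => _ _ _;
rewrite ?(gkeyC s2 s1) ?(gkeyC s3 s1) ?(gkeyC s3 s2) !oddD;
repeat match goal with |- context [odd (count_mem ?K ?w)] => case: (odd (count_mem K w)) end; done.
Qed.

Section L.
Variable l : nat.
Hypothesis hl : 1 <= l <= n.
Hypothesis hlT : l \notin [:: s1; s2; s3].

Ltac cc L := move: hlT; rewrite !inE => hlT'; case: hs => *; rewrite L //;
  try (rewrite /gkey !mem_sort !inE); lia.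

Lemma cPA12 : count_mem (gkey s1 s2 l) (PP s1 s2) =
  count_mem s2 (iota s1.+1 (s2 - s1.+1)) + count_mem l (iota s1.+1 (s2 - s1.+1)).
Proof. cc PP_count. Qed.
Lemma cPB12 : count_mem (gkey s1 s3 l) (PP s1 s2) =
  count_mem s3 (iota s1.+1 (s2 - s1.+1)) + count_mem l (iota s1.+1 (s2 - s1.+1)).
Proof. cc PP_count. Qed.
Lemma cPC12 : count_mem (gkey s2 s3 l) (PP s1 s2) = 0.
Proof. cc PP_zero. Qed.
Lemma cPA23 : count_mem (gkey s1 s2 l) (PP s2 s3) =
  count_mem s1 (iota s2.+1 (s3 - s2.+1)) + count_mem l (iota s2.+1 (s3 - s2.+1)).
Proof. rewrite gkeyC; cc PP_count. Qed.
Lemma cPB23 : count_mem (gkey s1 s3 l) (PP s2 s3) = 0.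
Proof. cc PP_zero. Qed.
Lemma cPC23 : count_mem (gkey s2 s3 l) (PP s2 s3) =
  count_mem s3 (iota s2.+1 (s3 - s2.+1)) + count_mem l (iota s2.+1 (s3 - s2.+1)).
Proof. cc PP_count. Qed.
Lemma cPA13 : count_mem (gkey s1 s2 l) (PP s1 s3) =
  count_mem s2 (iota s1.+1 (s3 - s1.+1)) + count_mem l (iota s1.+1 (s3 - s1.+1)).
Proof. cc PP_count. Qed.
Lemma cPB13 : count_mem (gkey s1 s3 l) (PP s1 s3) =
  count_mem s3 (iota s1.+1 (s3 - s1.+1)) + count_mem l (iota s1.+1 (s3 - s1.+1)).
Proof. cc PP_count. Qed.
Lemma cPC13 : count_mem (gkey s2 s3 l) (PP s1 s3) = 0.
Proof. cc PP_zero. Qed.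

Lemma cWA12 : count_mem (gkey s1 s2 l) (c_word n s1 s2) = 1.
Proof. cc cw_same. Qed.
Lemma cWB12 : count_mem (gkey s1 s3 l) (c_word n s1 s2) = 0.
Proof. cc cw_zero. Qed.
Lemma cWC12 : count_mem (gkey s2 s3 l) (c_word n s1 s2) = 0.
Proof. cc cw_zero. Qed.
Lemma cWA23 : count_mem (gkey s1 s2 l) (c_word n s2 s3) = 0.
Proof. cc cw_zero. Qed.
Lemma cWB23 : count_mem (gkey s1 s3 l) (c_word n s2 s3) = 0.
Proof. cc cw_zero. Qed.
Lemma cWC23 : count_mem (gkey s2 s3 l) (c_word n s2 s3) = 1.
Proof. cc cw_same. Qed.
Lemma cWA13 : count_mem (gkey s1 s2 l) (c_word n s1 s3) = 0.
Proof. cc cw_zero. Qed.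
Lemma cWB13 : count_mem (gkey s1 s3 l) (c_word n s1 s3) = 1.
Proof. cc cw_same. Qed.
Lemma cWC13 : count_mem (gkey s2 s3 l) (c_word n s1 s3) = 0.
Proof. cc cw_zero. Qed.

Lemma cSA12 s : count_mem (gkey s1 s2 l) (seg s1 s2 s) = count_mem l s.
Proof. cc seg_same. Qed.
Lemma cSB12 s : count_mem (gkey s1 s3 l) (seg s1 s2 s) = 0.
Proof. cc seg_zero. Qed.
Lemma cSC12 s : count_mem (gkey s2 s3 l) (seg s1 s2 s) = 0.
Proof. cc seg_zero. Qed.
Lemma cSA23 s : count_mem (gkey s1 s2 l) (seg s2 s3 s) = 0.
Proof. cc seg_zero. Qed.
Lemma cSB23 s : count_mem (gkey s1 s3 l) (seg s2 s3 s) = 0.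
Proof. cc seg_zero. Qed.
Lemma cSC23 s : count_mem (gkey s2 s3 l) (seg s2 s3 s) = count_mem l s.
Proof. cc seg_same. Qed.
Lemma cSA13 s : count_mem (gkey s1 s2 l) (seg s1 s3 s) = 0.
Proof. cc seg_zero. Qed.
Lemma cSB13 s : count_mem (gkey s1 s3 l) (seg s1 s3 s) = count_mem l s.
Proof. cc seg_same. Qed.
Lemma cSC13 s : count_mem (gkey s2 s3 l) (seg s1 s3 s) = 0.
Proof. cc seg_zero. Qed.

End L.

Ltac finish hl hlT := rewrite /I12a /I12b /I23a /I23b /I13a /I13b ?count_cat !count_iota;
  move: hlT; rewrite !inE => hlT; case: hs => *;
  (have : l < s1 \/ (s1 < l < s2) \/ (s2 < l < s3) \/ s3 < l by lia);
  case => [hreg|[hreg|[hreg|hreg]]]; split; evb; reflexivity.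

Lemma E4 : icc (PP s2 s3 ++ c_word n s2 s3 ++ seg s2 s3 I23a) = icc (PP s1 s2 ++ seg s1 s2 I12a).
Proof.
apply: ic_eqABC => l hl hlT.
rewrite !count_cat (cPA23 hl hlT) (cPB23 hl hlT) (cPC23 hl hlT) (cWA23 hl hlT) (cWB23 hl hlT)
  (cWC23 hl hlT) (cSA23 hl hlT) (cSB23 hl hlT) (cSC23 hl hlT) (cPA12 hl hlT) (cPB12 hl hlT)
  (cPC12 hl hlT) (cSA12 hl hlT) (cSB12 hl hlT) (cSC12 hl hlT).
finish hl hlT.
Qed.


Ltac allc hl hlT := rewrite !count_cat ?count_rev ?(cPA12 hl hlT) ?(cPA23 hl hlT) ?(cPA13 hl hlT) ?(cPB12 hl hlT) ?(cPB23 hl hlT) ?(cPB13 hl hlT) ?(cPC12 hl hlT) ?(cPC23 hl hlT) ?(cPC13 hl hlT) ?(cWA12 hl hlT) ?(cWA23 hl hlT) ?(cWA13 hl hlT) ?(cWB12 hl hlT) ?(cWB23 hl hlT) ?(cWB13 hl hlT) ?(cWC12 hl hlT) ?(cWC23 hl hlT) ?(cWC13 hl hlT) ?(cSA12 hl hlT) ?(cSA23 hl hlT) ?(cSA13 hl hlT) ?(cSB12 hl hlT) ?(cSB23 hl hlT) ?(cSB13 hl hlT) ?(cSC12 hl hlT) ?(cSC23 hl hlT) ?(cSC13 hl hlT).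

Lemma E5 : icc (PP s1 s2 ++ rev (seg s1 s2 I12b)) = icc (PP s1 s2 ++ c_word n s1 s2 ++ seg s1 s2 I12a).
Proof. apply: ic_eqABC => l hl hlT; allc hl hlT; finish hl hlT. Qed.

Lemma E6 : icc (PP s1 s3 ++ seg s1 s3 I13a) = icc (PP s2 s3 ++ seg s2 s3 I23a).
Proof. apply: ic_eqABC => l hl hlT; allc hl hlT; finish hl hlT. Qed.

Lemma E7 : icc (PP s1 s3 ++ c_word n s1 s3 ++ seg s1 s3 I13a) = icc (PP s1 s2 ++ c_word n s1 s2 ++ seg s1 s2 I12a).
Proof. apply: ic_eqABC => l hl hlT; allc hl hlT; finish hl hlT. Qed.


Definition pv := icc (PP s1 s2 ++ seg s1 s2 I12a).
Definition qv := icc (PP s1 s2 ++ c_word n s1 s2 ++ seg s1 s2 I12a).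
Definition rv := icc (PP s2 s3 ++ seg s2 s3 I23a).

Lemma F12 e : fx n i j k (s1, s2, e) = if e then [:: pv; qv] else [:: qv; pv].
Proof. case: e; [rewrite fT_form | rewrite fF_form]; by rewrite S12 V1 V2. Qed.
Lemma F23 e : fx n i j k (s2, s3, e) = if e then [:: rv; pv] else [:: pv; rv].
Proof. case: e; [rewrite fT_form | rewrite fF_form]; by rewrite S23 V3 V4 E4. Qed.
Lemma F13 e : fx n i j k (s1, s3, e) = if e then [:: qv; rv; qv; qv] else [:: qv; qv; rv; qv].
Proof. case: e; [rewrite fT_form | rewrite fF_form]; by rewrite V5 V6 V7 E5 E6 E7. Qed.

Lemma fx_nokey a b e : a \notin [:: s1; s2; s3] -> fx n i j k (a, b, e) = [::].
Proof.
move=> ha; rewrite /fx; apply: phiR_nokey; apply/negP => /gw_mem.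
by rewrite hkey (negbTE ha).
Qed.

Lemma fx_triv2 a b e : b \notin [:: s1; s2; s3] -> Feq (fx n i j k (a, b, e)) [::].
Proof.
move=> hb.
have hc : key \notin c_word n a b.
  by apply/negP => /cw_mem [_]; rewrite hkey (negbTE hb).
have hX : XX a b = [::] by rewrite /P2.XX phiR_nokey.
have hY : YY a b = [::] by rewrite /P2.YY phiR_nokey.
case: e; [rewrite fT_form | rewrite fF_form]; rewrite hX hY /=; exact: Frev.
Qed.

End Vals.

End P6.
Import P6.

Module P7.
Set Implicit Arguments. Unset Strict Implicit. Unset Printing Implicit Defensive.

Section Lab.
Variables (t1 t2 t3 : nat) (L1 L2 L3 : seq L).
Hypothesis ht : t1 < t2 < t3.

Definition labf (x : nat) : option (seq L) :=
  if x == t1 then Some L1 else if x == t2 then Some L2 else if x == t3 then Some L3 else None.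

Lemma labf_none x : x != t1 -> x != t2 -> x != t3 -> labf x = None.
Proof. by rewrite /labf => /negbTE -> /negbTE -> /negbTE ->. Qed.

Lemma labf1 : labf t1 = Some L1. Proof. by rewrite /labf eqxx. Qed.
Lemma labf2 : labf t2 = Some L2. Proof. rewrite /labf eqxx; case: eqP => //; lia. Qed.
Lemma labf3 : labf t3 = Some L3. Proof. rewrite /labf eqxx; do 2 (case: eqP; first lia); by []. Qed.

Lemma flat_none1 o s : (forall x, x \in s -> labf x = None) ->
  flatten [seq E2 (labf x) o true | x <- s] = [::].
Proof.
elim: s => [|x s IH] H //=; rewrite H; last by rewrite inE eqxx.
rewrite IH // => y hy; apply: H; by rewrite inE hy orbT.
Qed.
Lemma flat_none2 o s : (forall x, x \in s -> labf x = None) ->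
  flatten [seq E2 o (labf x) false | x <- s] = [::].
Proof.
elim: s => [|x s IH] H //=; rewrite H; last by rewrite inE eqxx.
rewrite IH; last by move=> y hy; apply: H; rewrite inE hy orbT.
by case: (o).
Qed.

Lemma EmNone a b e : labf b = None -> Em labf a b e = [::].
Proof.
move=> hb; rewrite /Em hb.
have h1 : forall s, flatten [seq E2 (labf x) None true | x <- s] = [::].
  by elim => //= x s ->; case: (labf x).
have h2 : forall s, flatten [seq E2 None (labf x) false | x <- s] = [::].
  by elim => //= x s ->.
by rewrite h1 h2 /=; case: (labf a).
Qed.

Lemma EmPal a b e : labf a = None -> rev L1 = L1 -> rev L2 = L2 -> rev L3 = L3 ->
  Feq (Em labf a b e) [::].
Proof.
move=> ha p1 p2 p3; rewrite /Em ha.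
set g := fun x => E2 (labf x) (labf b) true.
have eg : forall x, E2 (labf b) (labf x) false = g x by move=> x; rewrite /g; case: (labf b); case: (labf x).
have pg : forall x, rev (g x) = g x.
  move=> x; rewrite /g; case: (labf b) => [u|]; last by case: (labf x).
  rewrite /labf.
  case: eqP => _ /=; first exact: p1.
  case: eqP => _ /=; first exact: p2.
  by case: eqP => _ /=; first exact: p3.
have -> : [seq E2 (labf b) (labf x) false | x <- iota a.+1 (b - a.+1)] = [seq g x | x <- iota a.+1 (b - a.+1)].
  by apply: eq_map.
have fr : forall s, flatten [seq g x | x <- rev s] = rev (flatten [seq g x | x <- s]).
  elim => [|x s IH] //=; by rewrite rev_cons map_rcons -cats1 flatten_cat IH rev_cat /= cats0 pg.
rewrite fr /=; case: (labf b) => [u|] /=; rewrite ?cats0; exact: Frev'.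
Qed.

Lemma EmT12 e : Em labf t1 t2 e = if e then L1 ++ L2 else L2 ++ L1.
Proof.
have n2 : forall x, x \in iota t1.+1 (t2 - t1.+1) -> labf x = None.
  by move=> x; rewrite mem_iota => h; apply: labf_none; lia.
have n1 : forall x, x \in rev (iota t1.+1 (t2 - t1.+1)) -> labf x = None.
  by move=> x; rewrite mem_rev; apply: n2.
rewrite /Em labf1 labf2 (flat_none1 _ n1) (flat_none2 _ n2).
by case: e; rewrite /= cats0.
Qed.

Lemma EmT23 e : Em labf t2 t3 e = if e then L2 ++ L3 else L3 ++ L2.
Proof.
have n2 : forall x, x \in iota t2.+1 (t3 - t2.+1) -> labf x = None.
  by move=> x; rewrite mem_iota => h; apply: labf_none; lia.
have n1 : forall x, x \in rev (iota t2.+1 (t3 - t2.+1)) -> labf x = None.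
  by move=> x; rewrite mem_rev; apply: n2.
rewrite /Em labf2 labf3 (flat_none1 _ n1) (flat_none2 _ n2).
by case: e; rewrite /= cats0.
Qed.

Lemma EmT13 e : Em labf t1 t3 e = L2 ++ (if e then L1 ++ L3 else L3 ++ L1) ++ L2.
Proof.
have nA : forall x, x \in iota t1.+1 (t2 - t1.+1) -> labf x = None.
  by move=> x; rewrite mem_iota => h; apply: labf_none; lia.
have nB : forall x, x \in iota t2.+1 (t3 - t2.+1) -> labf x = None.
  by move=> x; rewrite mem_iota => h; apply: labf_none; lia.
have nA' : forall x, x \in rev (iota t1.+1 (t2 - t1.+1)) -> labf x = None.
  by move=> x; rewrite mem_rev; apply: nA.
have nB' : forall x, x \in rev (iota t2.+1 (t3 - t2.+1)) -> labf x = None.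
  by move=> x; rewrite mem_rev; apply: nB.
rewrite /Em labf1 labf3 (@iota_split t1.+1 (t3 - t1.+1) t2); last by lia.
have e1 : t1.+1 + (t3 - t1.+1) - t2.+1 = t3 - t2.+1 by lia.
rewrite e1 rev_cat rev_cons -cats1 !map_cat !flatten_cat (flat_none1 _ nA') (flat_none1 _ nB').
rewrite map_cons (flat_none2 _ nA).
have -> : flatten (E2 (Some L3) (labf t2) false :: [seq E2 (Some L3) (labf x) false | x <- iota t2.+1 (t3 - t2.+1)]) = E2 (Some L3) (labf t2) false ++ flatten [seq E2 (Some L3) (labf x) false | x <- iota t2.+1 (t3 - t2.+1)] by [].
rewrite (flat_none2 _ nB) /= labf2 /=.
by case: e; rewrite /= !cats0 -!catA.
Qed.

End Lab.

End P7.
Import P7.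

Module P8.
Set Implicit Arguments. Unset Strict Implicit. Unset Printing Implicit Defensive.

Section Final.
Variables (n i j k s1 s2 s3 l : nat).
Hypothesis hs : [/\ 1 <= s1, s1 < s2, s2 < s3 & s3 <= n].
Hypothesis hkey : gkey i j k = [:: s1; s2; s3].
Hypothesis hT : forall x, (x \in [:: i; j; k]) = (x \in [:: s1; s2; s3]).
Hypothesis hij : [/\ i != j, j != k & i != k].
Hypothesis hl : 1 <= l <= n.
Hypothesis hlT : l \notin [:: s1; s2; s3].

Definition rl (x : nat) := if l < x then x.-1 else x.

Local Notation p := (pv n i j k s1 s2 s3).
Local Notation q := (qv n i j k s1 s2 s3).
Local Notation r := (rv n i j k s1 s2 s3).
Definition lab := labf (rl s1) (rl s2) (rl s3) [:: p; q; p] [:: p] [:: p; r; p].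

Lemma rl_neq a c : a != l -> c != l -> a != c -> rl a != rl c.
Proof. rewrite /rl; case: ifP; case: ifP; lia. Qed.

Lemma ht : rl s1 < rl s2 < rl s3.
Proof. move: hlT; rewrite !inE /rl => h; case: hs => *; case: ifP; case: ifP; case: ifP; lia. Qed.

Lemma labS x u : lab x = Some u -> x \in [:: rl s1; rl s2; rl s3].
Proof. rewrite /lab /labf !inE; case: eqP => //; case: eqP => //; case: eqP => //. Qed.

Lemma labI x u : lab x = Some u -> Feq (u ++ u) [::].
Proof.
rewrite /lab /labf; case: eqP => _; [case=> <-|case: eqP => _; [case=> <-|case: eqP => _; [case=> <-|by []]]].
- exact: (Frev [:: p; q; p]).
- exact: (Frev [:: p]).
- exact: (Frev [:: p; r; p]).
Qed.

Lemma lab_none a : a != l -> a \notin [:: s1; s2; s3] -> lab (rl a) = None.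
Proof.
move=> hal; rewrite !inE => ha; move: hlT; rewrite !inE => h.
apply: labf_none; apply: rl_neq => //; lia.
Qed.

Lemma letter_keep a b e : 1 <= a -> a < b -> b <= n -> a != l -> b != l ->
  Feq (fx n i j k (a, b, e)) (Em lab (rl a) (rl b) e).
Proof.
move=> ha hab hb hal hbl.
case hbT: (b \in [:: s1; s2; s3]); last first.
  rewrite EmNone; last by apply: lab_none => //; rewrite hbT.
  by apply: (fx_triv2 _ hkey); rewrite hbT.
case haT: (a \in [:: s1; s2; s3]); last first.
  rewrite (fx_nokey _ hkey); last by rewrite haT.
  apply: Fsym; apply: EmPal => //; apply: lab_none => //; by rewrite haT.
have := ht; move: haT hbT; rewrite !inE => haT hbT hT'.
have hts := ht.
case: hs => h1 h2 h3 h4.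
have : [|| (a == s1) && (b == s2), (a == s2) && (b == s3) | (a == s1) && (b == s3)].
  move: haT hbT; case/or3P => /eqP ea; case/or3P => /eqP eb; subst; rewrite ?eqxx ?andbT ?orbT //; lia.
case/or3P => [/andP [/eqP -> /eqP ->] | /andP [/eqP -> /eqP ->] | /andP [/eqP -> /eqP ->]].
- rewrite (F12 hs hkey) /lab (@EmT12 (rl s1) (rl s2) (rl s3) _ _ _ ht).
  case: e => /=.
    exact: (Fsym (Fxx_in p [:: p; q] [::])).
  exact: (Fsym (Fxx_in p [::] [:: q; p])).
- rewrite (F23 hs hkey hT hij) /lab (@EmT23 (rl s1) (rl s2) (rl s3) _ _ _ ht).
  case: e => /=.
    exact: (Fsym (Fxx_in p [::] [:: r; p])).
  exact: (Fsym (Fxx_in p [:: p; r] [::])).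
- rewrite (F13 hs hkey hT hij) /lab (@EmT13 (rl s1) (rl s2) (rl s3) _ _ _ ht).
  case: e => /=.
    apply: Ftrans (Fxx_in q [:: q; r] [::]) _ => /=.
    apply: Fsym; apply: Ftrans (Fxx_in p [::] [:: q; p; p; r; p; p]) _ => /=.
    apply: Ftrans (Fxx_in p [:: q] [:: r; p; p]) _ => /=.
    exact: (Fxx_in p [:: q; r] [::]).
  apply: Ftrans (Fxx_in q [::] [:: r; q]) _ => /=.
  apply: Fsym; apply: Ftrans (Fxx_in p [::] [:: r; p; p; q; p; p]) _ => /=.
  apply: Ftrans (Fxx_in p [:: r] [:: q; p; p]) _ => /=.
  exact: (Fxx_in p [:: r; q] [::]).
Qed.

Lemma letter_drop a b e : ~~ ((a != l) && (b != l)) -> Feq (fx n i j k (a, b, e)) [::].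
Proof.
move=> h; case haT: (a \in [:: s1; s2; s3]); last first.
  rewrite (fx_nokey _ hkey); last by rewrite haT.
  exact: Frefl.
apply: (fx_triv2 _ hkey); apply/negP => hb.
move: h haT hb hlT; rewrite !inE; lia.
Qed.

Lemma main_feq w : pb_valid n w ->
  Feq (flatten [seq fx n i j k x | x <- w])
      (flatten [seq (let: (a, b, e) := y in Em lab a b e) | y <- delete_strand l w]).
Proof.
elim: w => [|[[a b] e] w IH] /=; first by move=> _; exact: Frefl.
move=> /andP [/andP [/andP [ha hab] hb] hw].
rewrite /delete_strand /=.
case: ifP => hk /=.
  apply: Fcat; last exact: IH.
  by move: hk => /andP [h1 h2]; apply: letter_keep.
have := Fcat (letter_drop e (negbT hk)) (IH hw); by [].
Qed.

Lemma del_ok w : pb_valid n w -> pb_ok (delete_strand l w).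
Proof.
elim: w => [|[[a b] e] w IH] //= /andP [/andP [/andP [ha hab] hb] hw].
rewrite /delete_strand /=; case: ifP => hk /=; last exact: IH hw.
apply/andP; split; last exact: IH hw.
move: hk; case: ifP; case: ifP; lia.
Qed.

Lemma final w : pb_valid n w -> pb_trivial n.-1 (delete_strand l w) ->
  F_trivial (phi_ijk n i j k (phi_n n w)).
Proof.
move=> hv ht'.
rewrite /F_trivial phi_n_decomp.
apply: Ftrans (main_feq hv) _.
rewrite -braid_model; last exact: del_ok.
have [_ H] := cong_inv labS labI ht' (pi := id) (fun x y (h : id x = id y) => h).
exact: H.
Qed.

End Final.

End P8.
Import P8.


Theorem mainTheorem2 (n : nat) (w : seq (nat * nat * bool)) (i j k : nat) :
  4 <= n -> pb_valid n w -> brunnian n w ->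
  1 <= i <= n -> 1 <= j <= n -> 1 <= k <= n ->
  i != j -> j != k -> i != k ->
  F_trivial (phi_ijk n i j k (phi_n n w)).
Proof.
move=> hn hv hbr hi hj hk hij hjk hik.
have pt : perm_eq (gkey i j k) [:: i; j; k] by rewrite /gkey perm_sort perm_refl.
have st : sorted leq (gkey i j k) := sort_sorted leq_total _.
have ut : uniq (gkey i j k).
  by rewrite (perm_uniq pt) /= !inE negb_or hij hik hjk.
have sz : size (gkey i j k) = 3 by rewrite (perm_size pt).
move: pt st ut sz; case Ht: (gkey i j k) => [|s1 [|s2 [|s3 [|x t]]]] // pt st ut _.
have hT : forall x, (x \in [:: i; j; k]) = (x \in [:: s1; s2; s3]) by move=> x; rewrite (perm_mem pt).
move: st ut => /= /and3P [l12 l23 _] /and3P [u1 u2 _].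
move: u1 u2; rewrite !inE negb_or => /andP [u12 u13] u23.
have m1 : s1 \in [:: i; j; k] by rewrite hT !inE eqxx.
have m3 : s3 \in [:: i; j; k] by rewrite hT !inE eqxx !orbT.
move: m1 m3; rewrite !inE => m1 m3.
have hs : [/\ 1 <= s1, s1 < s2, s2 < s3 & s3 <= n] by split; lia.
have [l [hl hlT]] : exists l, 1 <= l <= n /\ l \notin [:: s1; s2; s3].
  case: (ltnP 1 s1) => h1; first by exists 1; rewrite !inE; lia.
  case: (ltnP 2 s2) => h2; first by exists 2; rewrite !inE; lia.
  case: (ltnP 3 s3) => h3; first by exists 3; rewrite !inE; lia.
  by exists 4; rewrite !inE; lia.
apply: (@final n i j k s1 s2 s3 l hs Ht hT (And3 hij hjk hik) hl hlT w hv).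
apply: hbr; lia.
Qed.
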